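(* Let $n\ge2$. For any two polar $n$-complex numbers $u,u'$, $$|uu'|\le\sqrt n\,|u|\,|u'|,$$ where $|x_0+h_1x_1+\cdots+h_{n-1}x_{n-1}|=(x_0^2+\cdots+x_{n-1}^2)^{1/2}$. Consequently $|u^l|\le n^{(l-1)/2}|u|^l$ and $|au^l|\le n^{l/2}|a||u|^l$ for every natural number $l\ge1$ and polar $n$-complex $a,u$.
   Context: Polar $n$-complex numbers: $u=x_0+h_1x_1+\cdots+h_{n-1}x_{n-1}$, $x_j\in\mathbb{R}$, $h_0=1$, with componentwise addition and bilinear multiplication $h_jh_k=h_{(j+k)\bmod n}$. *)

(* Defs.v *)
(* Polar n-complex numbers over a real closed field R,
   represented by their coordinate vectors x : 'I_n -> R (x i is the
   coefficient of h_i, h_0 = 1). *)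
From HB Require Import structures.
From mathcomp Require Import all_boot all_order all_algebra.
Set Implicit Arguments. Unset Strict Implicit. Unset Printing Implicit Defensive.
Import Order.TTheory GRing.Theory Num.Theory.
Local Open Scope ring_scope.

Definition pcomplex (R : rcfType) (n : nat) := 'I_n -> R.

(* bilinear product with h_j h_k = h_{(j+k) mod n} *)
Definition pc_mul (R : rcfType) (n : nat) (u v : pcomplex R n) : pcomplex R n :=
  fun k => \sum_(i < n) \sum_(j < n | ((i + j) %% n)%N == (k : nat)) u i * v j.

Definition pc_one (R : rcfType) (n : nat) : pcomplex R n :=
  fun k => ((k : nat) == 0%N)%:R.

Fixpoint pc_pow (R : rcfType) (n : nat) (u : pcomplex R n) (l : nat) : pcomplex R n :=
  match l with
  | 0%N => @pc_one R n
  | l'.+1 => @pc_mul R n u (pc_pow u l')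
  end.

Definition pc_norm (R : rcfType) (n : nat) (u : pcomplex R n) : R :=
  Num.sqrt (\sum_(i < n) u i ^+ 2).

(* Main.v *)
Require Import Defs.
From mathcomp Require Import all_boot all_order all_algebra ring lra.
Import Order.TTheory GRing.Theory Num.Theory.
Local Open Scope ring_scope.

Lemma cs (R : realFieldType) n (a b : 'I_n -> R) :
  (\sum_i a i * b i) ^+ 2 <= (\sum_i a i ^+ 2) * (\sum_i b i ^+ 2).
Proof.
have H : \sum_i \sum_j (a i * b j - a j * b i) ^+ 2 =
  2 * ((\sum_i a i ^+ 2) * (\sum_i b i ^+ 2) - (\sum_i a i * b i) ^+ 2).
  have E : forall i, \sum_j (a i * b j - a j * b i) ^+ 2 =
     \sum_j a i ^+ 2 * b j ^+ 2 + \sum_j a j ^+ 2 * b i ^+ 2 - \sum_j 2 * ((a i * b i) * (a j * b j)).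
    move=> i; rewrite -big_split -sumrB; apply: eq_bigr => j _ /=; ring.
  rewrite (eq_bigr _ (fun i _ => E i)) sumrB big_split /=.
  rewrite [\sum_i \sum_j a j ^+ 2 * b i ^+ 2]exchange_big /=.
  have F1 : \sum_i \sum_j a i ^+ 2 * b j ^+ 2 = (\sum_i a i ^+ 2) * (\sum_i b i ^+ 2).
    by rewrite big_distrl; apply: eq_bigr => i _; rewrite big_distrr.
  have F2 : \sum_i \sum_j (2 : R) * ((a i * b i) * (a j * b j)) = 2 * (\sum_i a i * b i) ^+ 2.
    rewrite expr2 mulr_suml mulr_sumr; apply: eq_bigr => i _.
    by rewrite mulr_sumr mulr_sumr; apply: eq_bigr => j _; ring.
  rewrite F1 F2; ring.
have : 0 <= \sum_i \sum_j (a i * b j - a j * b i) ^+ 2.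
  by apply: sumr_ge0 => i _; apply: sumr_ge0 => j _; exact: sqr_ge0.
rewrite H => h; rewrite -subr_ge0; lra.
Qed.

Lemma single (R : realFieldType) n (P : pred 'I_n) (v : 'I_n -> R) :
  (forall j j', P j -> P j' -> j = j') ->
  (\sum_(j | P j) v j) ^+ 2 = \sum_(j | P j) v j ^+ 2.
Proof.
move=> Hu; case: (pickP P) => [j0 Pj0|P0].
  have Z : forall F : 'I_n -> R, \sum_(j | P j && (j != j0)) F j = 0.
    move=> F; apply: big1 => j /andP [Pj nj].
    by rewrite (Hu _ _ Pj Pj0) eqxx in nj.
  by rewrite (bigD1 j0 Pj0) /= Z addr0 (bigD1 j0 Pj0) /= Z addr0.
by rewrite !big_pred0 // expr0n.
Qed.

Lemma uniqP n (i : 'I_n) (k : 'I_n) (j j' : 'I_n) :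
  ((i + j) %% n)%N == k -> ((i + j') %% n)%N == k -> j = j'.
Proof.
move=> /eqP h /eqP h'; apply: val_inj => /=.
have : (i + j == i + j' %[mod n])%N by rewrite h h'.
by rewrite eqn_modDl !modn_small // => /eqP.
Qed.

Lemma reidx (R : realFieldType) n (i : 'I_n) (f : 'I_n -> R) :
  \sum_(k < n) \sum_(j < n | ((i + j) %% n)%N == k) f j = \sum_j f j.
Proof.
have n0 : (0 < n)%N by apply: (leq_ltn_trans _ (ltn_ord i)).
rewrite (exchange_big_dep xpredT) //=; apply: eq_bigr => j _.
by rewrite (big_pred1 (Ordinal (ltn_pmod (i + j) n0))) // => k /=; rewrite eq_sym.
 
Qed.

Definition sqn {R : rcfType} {n} (w : pcomplex R n) := \sum_i w i ^+ 2.

Lemma S_ge0 (R : rcfType) n (w : pcomplex R n) : 0 <= sqn w.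
Proof. by apply: sumr_ge0 => i _; exact: sqr_ge0. Qed.

Lemma S_mul (R : rcfType) n (u v : pcomplex R n) :
  sqn (pc_mul u v) <= n%:R * sqn u * sqn v.
Proof.
rewrite /sqn /pc_mul.
pose w (k i : 'I_n) := \sum_(j < n | ((i + j) %% n)%N == k) v j.
have E : forall k : 'I_n, \sum_(i < n) \sum_(j < n | ((i + j) %% n)%N == k) u i * v j
   = \sum_i u i * w k i.
  by move=> k; apply: eq_bigr => i _; rewrite mulr_sumr.
under eq_bigr => k _ do rewrite E.
apply: (@le_trans _ _ (\sum_(k < n) (\sum_i u i ^+ 2) * \sum_i w k i ^+ 2)).
  by apply: ler_sum => k _; exact: cs.
rewrite -mulr_sumr exchange_big /=.
have W : forall i : 'I_n, \sum_(k < n) w k i ^+ 2 = \sum_j v j ^+ 2.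
  move=> i; rewrite -(@reidx _ _ i (fun j => v j ^+ 2)); apply: eq_bigr => k _.
  by rewrite /w single // => j j'; exact: uniqP.
rewrite (eq_bigr _ (fun i _ => W i)).
rewrite sumr_const card_ord -mulr_natl; rewrite le_eqVlt; apply/orP; left; apply/eqP; ring.
Qed.

Lemma mul_one (R : rcfType) n (n0 : (0 < n)%N) (u : pcomplex R n) k :
  pc_mul u (@pc_one R n) k = u k.
Proof.
rewrite /pc_mul /pc_one (exchange_big_dep xpredT) //=.
rewrite (bigD1 (Ordinal n0)) //= [X in _ + X]big1 ?addr0.
  rewrite (big_pred1 k) ?eqxx ?mulr1 // => i /=.
  by rewrite addn0 modn_small.
move=> j nj; apply: big1 => i _.
have -> : ((j : nat) == 0%N) = false.
  by apply/negbTE; apply: contra nj => /eqP h; apply/eqP/val_inj.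
by rewrite mulr0.
Qed.

Lemma norm_mul (R : rcfType) n (u v : pcomplex R n) :
  pc_norm (pc_mul u v) <= Num.sqrt (n%:R) * pc_norm u * pc_norm v.
Proof.
rewrite /pc_norm -sqrtrM ?ler0n // -sqrtrM; last first.
  by apply: mulr_ge0 => //; apply: sumr_ge0 => i _; exact: sqr_ge0.
apply: ler_wsqrtr; exact: S_mul.
Qed.

Lemma norm_ge0 (R : rcfType) n (u : pcomplex R n) : 0 <= pc_norm u.
Proof. exact: sqrtr_ge0. Qed.

Lemma norm_pow (R : rcfType) n (n0 : (0 < n)%N) (u : pcomplex R n) l :
  pc_norm (pc_pow u l.+1) <= Num.sqrt (n%:R) ^+ l * pc_norm u ^+ l.+1.
Proof.
elim: l => [|l IH].
  rewrite /= expr0 mul1r expr1 le_eqVlt; apply/orP; left; apply/eqP.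
  by rewrite /pc_norm; congr Num.sqrt; apply: eq_bigr => k _; rewrite mul_one.
change (pc_norm (pc_mul u (pc_pow u l.+1)) <= Num.sqrt (n%:R) ^+ l.+1 * pc_norm u ^+ l.+2).
apply: (le_trans (norm_mul _ _ _ _)).
apply: (@le_trans _ _ (Num.sqrt (n%:R) * pc_norm u * (Num.sqrt (n%:R) ^+ l * pc_norm u ^+ l.+1))).
  apply: ler_wpM2l => //; apply: mulr_ge0; [exact: sqrtr_ge0 | exact: norm_ge0].
rewrite le_eqVlt; apply/orP; left; apply/eqP; rewrite !exprS; ring.
Qed.

Theorem mainTheorem8 (R : rcfType) (n : nat) (hn : (2 <= n)%N) :
  (forall u u' : pcomplex R n,
      pc_norm (pc_mul u u') <= Num.sqrt (n%:R) * pc_norm u * pc_norm u') /\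
  (forall (u : pcomplex R n) (l : nat), (1 <= l)%N ->
      pc_norm (pc_pow u l) <= Num.sqrt (n%:R) ^+ (l - 1) * pc_norm u ^+ l) /\
  (forall (a u : pcomplex R n) (l : nat), (1 <= l)%N ->
      pc_norm (pc_mul a (pc_pow u l))
        <= Num.sqrt (n%:R) ^+ l * pc_norm a * pc_norm u ^+ l).
Proof.
have n0 : (0 < n)%N by apply: leq_trans hn.
split; first exact: norm_mul.
split.
  by move=> u [|l] // _; rewrite subn1 /=; exact: norm_pow.
move=> a u [|l] // _.
apply: (le_trans (norm_mul _ _ _ _)).
apply: (@le_trans _ _ (Num.sqrt (n%:R) * pc_norm a * (Num.sqrt (n%:R) ^+ l * pc_norm u ^+ l.+1))).
  apply: ler_wpM2l; last exact: norm_pow.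
  apply: mulr_ge0; [exact: sqrtr_ge0 | exact: norm_ge0].
rewrite le_eqVlt; apply/orP; left; apply/eqP; rewrite !exprS; ring.
Qed.
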